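(* Let $\Gamma_0$ be a torsion discrete abelian group, realized as a subgroup of $\bigoplus_{p} \bigl(\bigoplus_{j \in J_p} \mathcal{C}(p^\infty)\bigr)$ (direct sum over primes $p$, each $J_p$ an index set), and for each prime $p$ write $\Gamma^{(p)} := \bigoplus_{j \in J_p} \mathcal{C}(p^\infty)$. Let $N = p_1^{n_1}\cdots p_k^{n_k}$ with distinct primes $p_i$ and $n_i \in \mathbb{N}$, and let $E \subset \Gamma_0$ be $N$-PR. Then there exist subsets $E_i \subset \Gamma^{(p_i)}$ that are $p_i^{n_i}$-PR, $1 \le i \le k$, and bijections $f_i: E_1 \to E_i$ for $2 \le i \le k$, such that $$E = \{\gamma \oplus f_2(\gamma) \oplus \cdots \oplus f_k(\gamma) \oplus \beta_\gamma : \gamma \in E_1\}$$ for some elements $\beta_\gamma \in \bigoplus_{p \notin \{p_1,\dots,p_k\}} \Gamma^{(p)}$.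
   Context: $\mathcal{C}(p^\infty)$ denotes the group of all $p^m$-th roots of unity, $m \ge 1$. For a discrete abelian group $\Delta$ with compact dual $\widehat{\Delta}$ and $M \in \mathbb{N}$, a subset $E \subset \Delta$ is $M$-PR if for every function $\varphi: E \to \mathbb{Z}_M$ (the $M$-th roots of unity in the unit circle) there exists $x \in \widehat{\Delta}$ with $\varphi(\gamma) = \gamma(x)$ for all $\gamma \in E$. *)

(* Defs.v *)
From mathcomp Require Import all_boot all_algebra.
From mathcomp Require Import reals Rstruct complex.
From Stdlib Require Import List.
Import GRing.Theory Num.Theory.
Set Implicit Arguments. Unset Strict Implicit. Unset Printing Implicit Defensive.
Local Open Scope ring_scope.

Definition CC : Type := complex Rdefinitions.R.

(* Ambient carrier: families (g p j)_{p, j in J p} of complex numbers.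
   The group ⊕_p ⊕_{j ∈ J p} C(p^∞) is the subset [ambient J] below,
   with pointwise multiplication. *)
Definition amb (J : nat -> Type) : Type := forall p : nat, J p -> CC.

Definition amul (J : nat -> Type) (g h : amb J) : amb J := fun p j => g p j * h p j.
Definition aone (J : nat -> Type) : amb J := fun _ _ => 1.
Definition ainv (J : nat -> Type) (g : amb J) : amb J := fun p j => (g p j)^-1.

Definition Cpinf (p : nat) (z : CC) : Prop := exists m : nat, (0 < m)%N /\ z ^+ (p ^ m) = 1.

Definition ambient (J : nat -> Type) (g : amb J) : Prop :=
  (forall p (j : J p), ~~ prime p -> g p j = 1) /\
  (forall p (j : J p), Cpinf p (g p j)) /\
  (exists s : list {p : nat & J p},
      forall p (j : J p), g p j <> 1 -> In (existT _ p j) s).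

Definition Gammap (J : nat -> Type) (p : nat) (g : amb J) : Prop :=
  ambient g /\ forall q (j : J q), q <> p -> g q j = 1.

Definition Gamma_outside (J : nat -> Type) (P : nat -> Prop) (g : amb J) : Prop :=
  ambient g /\ forall q (j : J q), P q -> g q j = 1.

Definition is_subgroup (J : nat -> Type) (G : amb J -> Prop) : Prop :=
  (forall g, G g -> ambient g) /\ G (@aone J) /\
  (forall g h, G g -> G h -> G (amul g h)) /\ (forall g, G g -> G (ainv g)).

(* x is an element of the dual group of G, i.e. a continuous (G is discrete)
   homomorphism G -> T into the circle group *)
Definition character (J : nat -> Type) (G : amb J -> Prop) (x : amb J -> CC) : Prop :=
  (forall g, G g -> `|x g| = 1) /\
  (forall g h, G g -> G h -> x (amul g h) = x g * x h).

Definition PR (J : nat -> Type) (G : amb J -> Prop) (M : nat) (E : amb J -> Prop) : Prop :=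
  (forall g, E g -> G g) /\
  forall phi : amb J -> CC, (forall g, E g -> phi g ^+ M = 1) ->
    exists x, character G x /\ forall g, E g -> phi g = x g.

(* Main.v *)
Require Import Defs.
From mathcomp Require Import all_boot all_algebra.
From mathcomp Require Import reals Rstruct complex.
From mathcomp Require Import boolp classical_sets.
From Stdlib Require Import List ClassicalEpsilon.
Import GRing.Theory Num.Theory.
Set Implicit Arguments. Unset Strict Implicit. Unset Printing Implicit Defensive.
Local Open Scope ring_scope.

Section Basics.
Variable J : nat -> Type.
Local Notation T := (amb J).

Definition apow (g : T) (n : nat) : T := fun p j => g p j ^+ n.
Definition aproj (q : nat) (g : T) : T := fun r j => if r == q then g r j else 1.

Lemma amb_ext (g h : T) : (forall p j, g p j = h p j) -> g = h.
Proof.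
move=> H; apply: functional_extensionality_dep => p.
by apply: functional_extensionality_dep => j; apply: H.
Qed.

Lemma exp1_dvd (z : CC) d D : (d %| D)%N -> z ^+ d = 1 -> z ^+ D = 1.
Proof. by case/dvdnP=> k -> Hz; rewrite mulnC exprM Hz expr1n. Qed.

Lemma amb_nz (g : T) p j : ambient g -> g p j != 0.
Proof.
case=> H1 [H2 _]; have [pr|npr] := boolP (prime p); last by rewrite H1 ?oner_neq0.
case: (H2 p j) => m [m0 Hm]; apply/negP => /eqP E; move: Hm; rewrite E expr0n.
have -> : (p ^ m == 0)%N = false by apply/negbTE; rewrite -lt0n expn_gt0 prime_gt0.
by move=> /eqP; rewrite eq_sym oner_eq0.
Qed.

Definition sigQ (P : forall p, J p -> Prop) (t : {p : nat & J p}) : Prop :=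
  let: existT p j := t in P p j.

Definition Qe (g : T) q r (j : J r) a c :=
  ((r == q) -> g r j ^+ (q ^ a) = 1) /\ ((r != q) -> g r j ^+ c = 1).

Lemma Qe_mono (g : T) q r (j : J r) a c a' c' :
  Qe g q j a c -> (a <= a')%N -> (c %| c')%N -> Qe g q j a' c'.
Proof.
move=> [h1 h2] aa cc; split=> h.
  by apply: (exp1_dvd _ (h1 h)); rewrite dvdn_exp2l.
by apply: (exp1_dvd cc (h2 h)).
Qed.

Lemma ambient_exps (g : T) q : ambient g -> prime q ->
  exists a c, (0 < c)%N /\ coprime c q /\ forall r (j : J r), Qe g q j a c.
Proof.
move=> [H1 [H2 [s Hs]]] pq.
suff [a [c [c0 [cq Ha]]]] : exists a c, (0 < c)%N /\ coprime c q /\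
    forall r (j : J r), In (existT _ r j) s -> Qe g q j a c.
  exists a, c; split => //; split => // r j.
  have [E|NE] := eqVneq (g r j) 1.
    by split=> _; rewrite E expr1n.
  by apply: Ha; apply: Hs; apply/eqP.
elim: s {Hs} => [|[r0 j0] s [a [c [c0 [cq Ha]]]]].
  by exists 0%N, 1%N; split => //; split => //; rewrite /coprime gcd1n.
have [m [m0 Hm]] := H2 r0 j0.
have [pr0|npr0] := boolP (prime r0); last first.
  exists a, c; split => //; split => // r j [E|]; last exact: Ha.
  have : sigQ (fun r j => Qe g q j a c) (existT _ r0 j0).
    by rewrite /= /Qe (H1 _ _ npr0); split=> _; rewrite expr1n.
  by rewrite E.
have [Eq|Nq] := eqVneq r0 q.
  exists (a + m)%N, c; split => //; split => // r j [E|]; last first.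
    by move=> /Ha h; apply: (Qe_mono h) => //; rewrite leq_addr.
  have : sigQ (fun r j => Qe g q j (a + m) c) (existT _ r0 j0).
    rewrite /= /Qe; split=> h; last by rewrite Eq eqxx in h.
    by apply: (exp1_dvd _ Hm); rewrite -Eq dvdn_exp2l // leq_addl.
  by rewrite E.
exists a, (c * r0 ^ m)%N; split; first by rewrite muln_gt0 c0 expn_gt0 prime_gt0.
split.
  rewrite coprimeMl cq /= coprimeXl //.
  by rewrite prime_coprime // dvdn_prime2.
move=> r j [E|]; last first.
  by move=> /Ha h; apply: (Qe_mono h) => //; rewrite dvdn_mulr.
have : sigQ (fun r j => Qe g q j a (c * r0 ^ m)) (existT _ r0 j0).
  rewrite /= /Qe; split=> h; first by rewrite h in Nq.
  by apply: (exp1_dvd _ Hm); rewrite dvdn_mull.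
by rewrite E.
Qed.

Lemma key_proj (g : T) q A : ambient g -> prime q ->
  exists e, e = 1 %[mod q ^ A] /\ apow g e = aproj q g.
Proof.
move=> ag pq; have [a [c [c0 [cq Ha]]]] := ambient_exps ag pq.
set B := (a + A).+1.
have co : coprime (q ^ B) c by rewrite coprimeXl // coprime_sym.
set e := chinese (q ^ B) c 1 0.
have q1 : (1 < q ^ B)%N.
  apply: (@leq_trans (q ^ 1)); first by rewrite expn1 prime_gt1.
  by rewrite leq_exp2l ?prime_gt1.
have eB : (e %% q ^ B = 1)%N by rewrite (chinese_modl co) modn_small.
have ec : (e %% c = 0)%N by rewrite (chinese_modr co) mod0n.
exists e; split.
  rewrite -(modn_dvdm e (_ : (q ^ A %| q ^ B)%N)) ?eB //.
  by rewrite dvdn_exp2l // /B -addSn leq_addl.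
apply: amb_ext => r j; rewrite /apow /aproj; have [h1 h2] := Ha r j.
case: ifP => rq.
  rewrite -(expr_mod e (_ : g r j ^+ (q ^ B) = 1)) ?eB ?expr1 //.
  by apply: (exp1_dvd _ (h1 rq)); rewrite dvdn_exp2l // /B leqW // leq_addr.
by rewrite -(expr_mod e (h2 (negbT rq))) ec expr0.
Qed.

Lemma aone_ambient : ambient (@aone J).
Proof.
split=> //; split; first by move=> p j; exists 1%N; rewrite expr1n.
by exists nil => p j; rewrite /aone.
Qed.

Lemma amul_ambient (g h : T) : ambient g -> ambient h -> ambient (amul g h).
Proof.
move=> [g1 [g2 [s gs]]] [h1 [h2 [t ht]]]; split.
  by move=> p j np; rewrite /amul g1 // h1 // mulr1.
split.
  move=> p j; have [m1 [m10 e1]] := g2 p j; have [m2 [m20 e2]] := h2 p j.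
  exists (m1 + m2)%N; split; first by rewrite addn_gt0 m10.
  rewrite /amul exprMn (exp1_dvd _ e1) ?(exp1_dvd _ e2) ?mulr1 //.
    by rewrite dvdn_exp2l // leq_addl.
  by rewrite dvdn_exp2l // leq_addr.
exists (s ++ t) => p j H; apply: in_or_app.
have [E|E] := eqVneq (g p j) 1; last by left; apply: gs; apply/eqP.
right; apply: ht => E'; apply: H; by rewrite /amul E E' mulr1.
Qed.

Lemma ainv_ambient (g : T) : ambient g -> ambient (ainv g).
Proof.
move=> [g1 [g2 [s gs]]]; split.
  by move=> p j np; rewrite /ainv g1 // invr1.
split.
  move=> p j; have [m1 [m10 e1]] := g2 p j.
  by exists m1; split => //; rewrite /ainv exprVn e1 invr1.
exists s => p j H; apply: gs => E; apply: H; by rewrite /ainv E invr1.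
Qed.

Lemma apow_ambient (g : T) n : ambient g -> ambient (apow g n).
Proof.
move=> ag; elim: n => [|n IH].
  have -> : apow g 0 = @aone J by apply: amb_ext => p j; rewrite /apow expr0.
  exact: aone_ambient.
have -> : apow g n.+1 = amul (apow g n) g by apply: amb_ext => p j; rewrite /apow /amul exprSr.
exact: amul_ambient.
Qed.

Lemma amulV (g : T) : ambient g -> amul g (ainv g) = @aone J.
Proof. by move=> ag; apply: amb_ext => p j; rewrite /amul /ainv divff // amb_nz. Qed.

Lemma subgroup_apow (G : T -> Prop) g n : is_subgroup G -> G g -> G (apow g n).
Proof.
move=> [_ [G1 [GM _]]] Gg; elim: n => [|n IH].
  by have -> : apow g 0 = @aone J by apply: amb_ext => p j; rewrite /apow expr0.
have -> : apow g n.+1 = amul (apow g n) g by apply: amb_ext => p j; rewrite /apow /amul exprSr.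
exact: GM.
Qed.

Lemma char1 (G : T -> Prop) x : is_subgroup G -> character G x -> x (@aone J) = 1.
Proof.
move=> [_ [G1 _]] [xn xm].
have h := xm _ _ G1 G1; have e : amul (@aone J) (@aone J) = @aone J.
  by apply: amb_ext => p j; rewrite /amul mulr1.
rewrite e in h; have nz : x (@aone J) != 0 by rewrite -normr_eq0 xn // oner_eq0.
by apply: (mulIf nz); rewrite mul1r -h.
Qed.

Lemma charX (G : T -> Prop) x g n : is_subgroup G -> character G x -> G g ->
  x (apow g n) = x g ^+ n.
Proof.
move=> sG cx Gg; elim: n => [|n IH].
  have -> : apow g 0 = @aone J by apply: amb_ext => p j; rewrite /apow expr0.
  by rewrite (char1 sG cx) expr0.
have -> : apow g n.+1 = amul (apow g n) g by apply: amb_ext => p j; rewrite /apow /amul exprSr.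
by rewrite cx.2 ?IH ?exprSr //; apply: subgroup_apow.
Qed.

Lemma torsion (g : T) : ambient g -> exists m, (0 < m)%N /\ apow g m = @aone J.
Proof.
move=> ag; have [a [c [c0 [_ Ha]]]] := @ambient_exps g 2 ag isT.
exists (2 ^ a * c)%N; split; first by rewrite muln_gt0 c0 expn_gt0.
apply: amb_ext => r j; rewrite /apow /aone; have [h1 h2] := Ha r j.
have [h|h] := boolP (r == 2)%N.
  by apply: (exp1_dvd _ (h1 h)); rewrite dvdn_mulr.
by apply: (exp1_dvd _ (h2 h)); rewrite dvdn_mull.
Qed.

Lemma Gammap_subgroup q : is_subgroup (@Gammap J q).
Proof.
split; first by move=> g [].
split; first by split; [exact: aone_ambient|].
split.
  move=> g h [ag gq] [ah hq]; split; first exact: amul_ambient.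
  by move=> r j rq; rewrite /amul gq // hq // mulr1.
move=> g [ag gq]; split; first exact: ainv_ambient.
by move=> r j rq; rewrite /ainv gq // invr1.
Qed.

Lemma subgroupI (G H : T -> Prop) : is_subgroup G -> is_subgroup H ->
  is_subgroup (fun g => G g /\ H g).
Proof.
move=> [a1 [b1 [c1 d1]]] [a2 [b2 [c2 d2]]]; split; first by move=> g [/a1].
split=> //; split; first by move=> g h [? ?] [? ?]; split; [apply: c1|apply: c2].
by move=> g [? ?]; split; [apply: d1|apply: d2].
Qed.

End Basics.
Arguments apow {J} g n p.
Arguments aproj {J} q g p.


Section Ext.
Variable J : nat -> Type.
Local Notation T := (amb J).
Variables (A H : T -> Prop) (chi : T -> CC).
Hypotheses (sA : is_subgroup A) (sH : is_subgroup H) (HA : forall g, H g -> A g)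
  (cchi : character H chi).

Definition pairT := ((T -> Prop) * (T -> CC))%type.
Definition good (s : pairT) := is_subgroup s.1 /\ (forall g, H g -> s.1 g) /\
  (forall g, s.1 g -> A g) /\ character s.1 s.2 /\ (forall g, H g -> s.2 g = chi g).
Definition lep (s t : pairT) := (forall g, s.1 g -> t.1 g) /\ (forall g, s.1 g -> s.2 g = t.2 g).

Lemma amul_pow0 (k : T) (a : T) : amul k (apow a 0) = k.
Proof. by apply: amb_ext => p j; rewrite /amul /apow expr0 mulr1. Qed.

Lemma ext_step (s : pairT) a : good s -> A a -> ~ s.1 a ->
  exists s', good s' /\ lep s s' /\ s'.1 a.
Proof.
case: s => K psi [sK [HK [KA [cpsi psichi]]]] /= Aa Ka; simpl in *.
have ambA : forall g, A g -> ambient g by case: sA.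
have ambK : forall g, K g -> ambient g by case: sK.
have [_ [K1 [KM KV]]] := sK.
have aa := ambA _ Aa.
have [m0 [m00 am0]] := torsion aa.
pose P := fun m => (0 < m)%N && `[< K (apow a m) >].
have exP : exists m, P m by exists m0; rewrite /P m00 am0; apply/asboolP.
case: (ex_minnP exP) => m /andP [m_gt0 /asboolP Kam] minm.
pose w := m.-root (psi (apow a m)).
have hw : w ^+ m = psi (apow a m) by rewrite /w rootCK.
have nw : `|w| = 1.
  apply/eqP; rewrite -(pexpr_eq1 m_gt0) // -normrX hw.
  by rewrite cpsi.1.
have anz : forall r j t, a r j ^+ t != 0 by move=> r j t; rewrite expf_neq0 // amb_nz.
have WD : forall k k' t t', K k -> K k' -> amul k (apow a t) = amul k' (apow a t') ->
    psi k * w ^+ t = psi k' * w ^+ t'.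
  move=> k k' t t'.
  wlog tt : k k' t t' / (t' <= t)%N.
    move=> hyp; case: (leqP t' t) => h; first exact: hyp.
    by move=> Kk Kk' E; symmetry; apply: hyp => //; apply: ltnW.
  move=> Kk Kk' E.
  set d := (t - t')%N.
  have td : t = (d + t')%N by rewrite subnK.
  have E1 : amul k (apow a d) = k'.
    apply: amb_ext => r j; move/(congr1 (fun g => g r j)): E.
    rewrite /amul /apow td exprD mulrA => E; exact: (mulIf (anz r j t') E).
  have Kad : K (apow a d).
    have -> : apow a d = amul (ainv k) k'.
      apply: amb_ext => r j; rewrite -E1 /amul /ainv mulrA mulVf ?mul1r //.
      exact: amb_nz (ambK _ Kk).
    by apply: KM => //; apply: KV.
  have dm : (d %% m = 0)%N.
    apply/eqP; apply: contraT => nz.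
    have : (m <= d %% m)%N.
      apply: minm; rewrite /P lt0n nz /=; apply/asboolP.
      have -> : apow a (d %% m) = amul (apow a d) (ainv (apow (apow a m) (d %/ m))).
        apply: amb_ext => r j; rewrite /amul /ainv /apow -exprM mulnC.
        by rewrite {2}(divn_eq d m) exprD [X in X / _]mulrC mulfK // -exprM anz.
      by apply: KM => //; apply: KV; apply: subgroup_apow.
    by rewrite leqNgt ltn_pmod.
  have dq : d = (m * (d %/ m))%N by rewrite {1}(divn_eq d m) dm addn0 mulnC.
  have Ead : apow a d = apow (apow a m) (d %/ m).
    by apply: amb_ext => r j; rewrite /apow -exprM -dq.
  rewrite -E1 cpsi.2 // Ead (charX (d %/ m) sK cpsi Kam) -hw -exprM -dq td exprD.
  by rewrite mulrA.
pose K' := fun g => exists k t, K k /\ g = amul k (apow a t).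
pose psi' := fun g => let kt := epsilon (inhabits (@aone J, 0%N))
   (fun kt : T * nat => K kt.1 /\ g = amul kt.1 (apow a kt.2)) in psi kt.1 * w ^+ kt.2.
have psiE : forall k t, K k -> psi' (amul k (apow a t)) = psi k * w ^+ t.
  move=> k t Kk; rewrite /psi'.
  set kt := epsilon _ _.
  have [] : K kt.1 /\ amul k (apow a t) = amul kt.1 (apow a kt.2).
    by apply: (epsilon_spec (inhabits (@aone J, 0%N)) (fun kt : T * nat => K kt.1 /\ amul k (apow a t) = amul kt.1 (apow a kt.2))); exists (k, t).
  by move=> Kk1 E; symmetry; apply: WD.
have KA' : forall g, K' g -> A g.
  move=> g [k [t [Kk ->]]]; have [_ [_ [AM _]]] := sA.
  by apply: AM; [apply: KA | apply: subgroup_apow].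
have mulE : forall k k' t t', amul (amul k (apow a t)) (amul k' (apow a t')) =
    amul (amul k k') (apow a (t + t')).
  by move=> k k' t t'; apply: amb_ext => r j; rewrite /amul /apow exprD mulrACA.
have sK' : is_subgroup K'.
  split; first by move=> g /KA' /ambA.
  split; first by exists (@aone J), 0%N; rewrite amul_pow0.
  split.
    move=> g h [k [t [Kk ->]]] [k' [t' [Kk' ->]]] /=.
    by exists (amul k k'), (t + t')%N; split; [apply: KM|apply: mulE].
  move=> g [k [t [Kk ->]]]; exists (ainv k), (t * m0.-1)%N; split; first exact: KV.
  apply: amb_ext => r j; rewrite /ainv /amul /apow invfM; congr (_ * _).
  have e1 : a r j ^+ m0 = 1 by move/(congr1 (fun g => g r j)): am0.
  apply: (mulIf (anz r j t)); rewrite mulVf ?anz // -exprD -mulnSr prednK //.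
  by rewrite mulnC exprM e1 expr1n.
have HK' : forall g, H g -> K' g by move=> g Hg; exists g, 0%N; rewrite amul_pow0; split => //; apply: HK.
have KK' : forall g, K g -> K' g by move=> g Kg; exists g, 0%N; rewrite amul_pow0.
have psiK : forall g, K g -> psi' g = psi g by move=> g Kg; rewrite -{1}(amul_pow0 g a) psiE // expr0 mulr1.
exists (K', psi'); split; last first.
  split; last by exists (@aone J), 1%N; rewrite /amul /apow; split => //; apply: amb_ext => r j /=; rewrite mul1r expr1.
  by split => //= g Kg; rewrite psiK.
split => //; split => //; split => //; split.
  split.
    move=> g [k [t [Kk ->]]] /=; rewrite psiE // normrM normrX nw expr1n mulr1.
    by rewrite cpsi.1.
  move=> g h [k [t [Kk ->]]] [k' [t' [Kk' ->]]] /=.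
  rewrite mulE !psiE //; last by apply: KM.
  by rewrite cpsi.2 // exprD mulrACA.
by move=> g Hg /=; rewrite psiK ?psichi //; apply: HK.
Qed.

Definition Sg := {s : pairT | good s}.
Definition Rg : rel Sg := fun s t => `[< lep (sval s) (sval t) >].

Lemma extend_char : exists y, character A y /\ forall h, H h -> y h = chi h.
Proof.
have ambA : forall g, A g -> ambient g by case: sA.
have base : good (H, chi) by split => //; split => //.
have gs : forall s : Sg, good (sval s) by move=> [].
have inhS : inhabited Sg by constructor; exact: (exist _ _ base).
have [t tmax] : exists t, premaximal (fun x y => Rg x y) t.
  apply: (ZL_preorder (exist _ _ base)).
  - by move=> u; apply/asboolP; split.
  - move=> u v x /asboolP [h1 h2] /asboolP [h3 h4]; apply/asboolP; split.
      by move=> g /h1 /h3.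
    by move=> g g1; rewrite h2 // h4 //; apply: h1.
  move=> C Ctot.
  case: (pselect (exists s0, C s0)); last first.
    by move=> nC; exists (exist _ _ base) => s Cs; case: nC; exists s.
  move=> [s0 Cs0].
  pose Ks := fun g => exists s, C s /\ (sval s).1 g.
  pose psis := fun g => (sval (epsilon inhS (fun s => C s /\ (sval s).1 g))).2 g.
  have starE : forall s g, C s -> (sval s).1 g -> psis g = (sval s).2 g.
    move=> s g Cs Kg; rewrite /psis; set s' := epsilon _ _.
    have [Cs' Ks'] : C s' /\ (sval s').1 g.
      by apply: (epsilon_spec inhS (fun s => C s /\ (sval s).1 g)); exists s.
    case: (Ctot _ _ Cs Cs') => /asboolP [h1 h2]; last by rewrite h2.
    by rewrite h2.
  have common : forall s u g h, C s -> C u -> (sval s).1 g -> (sval u).1 h ->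
      exists v, C v /\ (sval v).1 g /\ (sval v).1 h.
    move=> s u g h Cs Cu Kg Kh; case: (Ctot _ _ Cs Cu) => /asboolP [h1 _].
      by exists u; split => //; split => //; apply: h1.
    by exists s; split => //; split => //; apply: h1.
  have gstar : good (Ks, psis).
    split.
      split; first by move=> g [s [_ Kg]]; apply: ambA; apply: (gs s).2.2.1.
      split; first by exists s0; split => //; case: (gs s0).1 => _ [].
      split.
        move=> g h [s [Cs Kg]] [u [Cu Kh]]; have [v [Cv [Kg' Kh']]] := common _ _ _ _ Cs Cu Kg Kh.
        by exists v; split => //; case: (gs v).1 => _ [_ [M _]]; apply: M.
      move=> g [s [Cs Kg]]; exists s; split => //; by case: (gs s).1 => _ [_ [_ V]]; apply: V.
    split; first by move=> g Hg; exists s0; split => //; apply: (gs s0).2.1.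
    split; first by move=> g [s [_ Kg]]; apply: (gs s).2.2.1.
    split.
      split.
        by move=> g [s [Cs Kg]] /=; rewrite (starE s) //; apply: (gs s).2.2.2.1.1.
      move=> g h [s [Cs Kg]] [u [Cu Kh]] /=; have [v [Cv [Kg' Kh']]] := common _ _ _ _ Cs Cu Kg Kh.
      have Kgh : (sval v).1 (amul g h) by case: (gs v).1 => _ [_ [M _]]; apply: M.
      by rewrite !(starE v) //; apply: (gs v).2.2.2.1.2.
    move=> h Hh /=; have K0h : (sval s0).1 h by apply: (gs s0).2.1.
    by rewrite (starE s0) //; apply: (gs s0).2.2.2.2.
  exists (exist _ _ gstar) => s Cs; apply/asboolP; split.
    by move=> g Kg; exists s.
  by move=> g Kg /=; rewrite (starE s).
have [gt1 [gt2 [gt3 [gt4 gt5]]]] := gs t.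
have AK : forall a, A a -> (sval t).1 a.
  move=> a Aa; case: (pselect ((sval t).1 a)) => // nK.
  have [s' [gs' [le' Ks']]] := ext_step (gs t) Aa nK.
  have : Rg (exist _ s' gs') t by apply: tmax; apply/asboolP.
  by move=> /asboolP [h _]; apply: h.
exists (sval t).2; split; last exact: gt5.
split; first by move=> g /AK; apply: gt4.1.
by move=> g h /AK Ag /AK Ah; apply: gt4.2.
Qed.
End Ext.


Lemma zeta_exists (q : nat) : prime q -> exists z : CC, z != 1 /\ z ^+ q = 1.
Proof.
move=> pq; have q1 := prime_gt1 pq.
have q0 : (0 < q.-1)%N by rewrite -ltnS prednK // ltnW.
have [x hx] := @solve_monicpoly CC q.-1 (fun _ => -1) q0.
have hs : \sum_(i < q) x ^+ i = 0.
  rewrite -(prednK (ltnW q1)) big_ord_recr /= hx.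
  by rewrite -big_split /=; apply: big1 => i _; rewrite mulN1r addrN.
exists x; split.
  apply/negP => /eqP x1; move: hs; rewrite x1.
  under eq_bigr do rewrite expr1n.
  by rewrite sumr_const card_ord => /eqP; rewrite pnatr_eq0; case: (q) pq.
by apply/eqP; rewrite -subr_eq0 subrX1 hs mulr0.
Qed.

Section Main.
Variables (J : nat -> Type) (k : nat) (p : 'I_k.+1 -> nat).
Hypothesis pinj : injective p.
Local Notation T := (amb J).

Lemma decomp (x : T) :
  (fun q j => aproj (p ord0) x q j * (\prod_(i < k.+1 | i != ord0) aproj (p i) x q j) *
     (if [exists i, q == p i] then 1 else x q j)) = x.
Proof.
apply: amb_ext => q j; rewrite /aproj.
case: (boolP [exists i, q == p i]) => [/existsP [i0 /eqP qi0] | nex].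
  have qe : forall i, (q == p i) = (i0 == i) by move=> i; rewrite qi0 (inj_eq pinj).
  rewrite mulr1 !qe; case: (eqVneq i0 ord0) => [e0|ni0].
    rewrite big1 ?mulr1 // => i ni; rewrite qe e0 eq_sym.
    by rewrite (negbTE ni).
  rewrite mul1r (bigD1 i0) //= qe eqxx big1 ?mulr1 //.
  by move=> i /andP [_ ni]; rewrite qe eq_sym (negbTE ni).
have nq : forall i, (q == p i) = false.
  by move=> i; apply: negbTE; apply: contra nex => h; apply/existsP; exists i.
by rewrite nq big1 ?mul1r // => i _; rewrite nq.
Qed.
End Main.

Theorem proposition3p5 (J : nat -> Type) (Gamma0 : amb J -> Prop)
  (k : nat) (p n : 'I_k.+1 -> nat) (N : nat) (E : amb J -> Prop) :
  is_subgroup Gamma0 ->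
  (forall i, prime (p i)) -> injective p -> (forall i, (0 < n i)%N) ->
  N = (\prod_(i < k.+1) p i ^ n i)%N ->
  (forall g, E g -> Gamma0 g) ->
  PR Gamma0 N E ->
  exists (Es : 'I_k.+1 -> amb J -> Prop) (f : 'I_k.+1 -> amb J -> amb J)
         (beta : amb J -> amb J),
    (forall i, (forall g, Es i g -> Gammap (p i) g) /\
               PR (Gammap (p i)) (p i ^ n i)%N (Es i)) /\
    (forall i, i != ord0 ->
       (forall g, Es ord0 g -> Es i (f i g)) /\
       (forall g h, Es ord0 g -> Es ord0 h -> f i g = f i h -> g = h) /\
       (forall h, Es i h -> exists g, Es ord0 g /\ f i g = h)) /\
    (forall g, Es ord0 g -> Gamma_outside (fun q => exists i, q = p i) (beta g)) /\
    (forall x, E x <-> exists g, Es ord0 g /\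
        x = (fun q j => g q j * (\prod_(i < k.+1 | i != ord0) f i g q j) * beta g q j)).
Proof.
move=> sG pp pinj n0 HN EG [_ PRE].
have ambG : forall g, Gamma0 g -> ambient g by case: sG.
have [_ [G1 [GM GV]]] := sG.
have ambE : forall x, E x -> ambient x by move=> x /EG /ambG.
have dvdN : forall i, (p i ^ n i %| N)%N by move=> i; rewrite HN (bigD1 i) //= dvdn_mulr.
have K1a : forall x i, E x -> Gamma0 (aproj (p i) x).
  move=> x i Ex; have [e [_ <-]] := key_proj 0 (ambE _ Ex) (pp i).
  by apply: subgroup_apow; [exact: sG | exact: EG].
have K1b : forall x i, E x -> Gammap (p i) (aproj (p i) x).
  move=> x i Ex; split; last by move=> q j qi; rewrite /aproj (negbTE (introN eqP qi)).
  by apply: ambG; apply: K1a.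
have K2 : forall x y i, E x -> E y -> aproj (p i) x = aproj (p i) y -> x = y.
  move=> x y i Ex Ey Exy; case: (pselect (x = y)) => [->//|nxy].
  have [z [z1 zp]] := zeta_exists (pp i).
  have zN : z ^+ N = 1.
    apply: (exp1_dvd _ zp); apply: dvdn_trans (dvdN i).
    by apply: dvdn_exp => //; apply: n0.
  have hphi : forall g, E g -> (fun g => if `[< g = x >] then z else 1) g ^+ N = 1.
    by move=> g _ /=; case: ifP => _; rewrite ?zN ?expr1n.
  have [chi [cchi hchi]] := PRE _ hphi.
  have chix : chi x = z by rewrite -hchi //; case: asboolP.
  have chiy : chi y = 1.
    rewrite -hchi //; case: asboolP => // yx; by case: nxy.
  have Gy := EG _ Ey; have Gx := EG _ Ex.
  have chiVy : chi (ainv y) = 1.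
    have := cchi.2 _ _ Gy (GV _ Gy); rewrite (amulV (ambG _ Gy)) (char1 sG cchi) chiy mul1r.
    by move=> <-.
  set d := amul x (ainv y).
  have Gd : Gamma0 d by apply: GM => //; apply: GV.
  have chid : chi d = z by rewrite cchi.2 ?chix ?chiVy ?mulr1 //; apply: GV.
  have pd : aproj (p i) d = @aone J.
    apply: amb_ext => r j; rewrite /aproj /d /amul /ainv /aone; case: ifP => // rb.
    have := congr1 (fun g => g r j) Exy; rewrite /aproj rb => ->.
    by rewrite divff // amb_nz //; apply: ambE.
  have [e [e1 de]] := key_proj 1 (ambG _ Gd) (pp i).
  have := charX e sG cchi Gd; rewrite de pd (char1 sG cchi) chid.
  rewrite expn1 in e1; rewrite -(expr_mod e zp) e1 modn_small ?prime_gt1 // expr1 => z1'.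
  by rewrite -z1' eqxx in z1.
pose Es := fun i h => exists x, E x /\ h = aproj (p i) x.
pose rep := fun h => epsilon (inhabits (@aone J)) (fun x => E x /\ aproj (p ord0) x = h).
pose f := fun i h => aproj (p i) (rep h).
pose beta := fun h : amb J => (fun q j => if [exists i, q == p i] then 1 else rep h q j) : amb J.
have repP : forall h, Es ord0 h -> E (rep h) /\ aproj (p ord0) (rep h) = h.
  move=> h [x [Ex ->]].
  by apply: (epsilon_spec (inhabits (@aone J)) (fun y => E y /\ aproj (p ord0) y = aproj (p ord0) x)); exists x.
have repE : forall x, E x -> rep (aproj (p ord0) x) = x.
  move=> x Ex; have [Er pr] : E (rep (aproj (p ord0) x)) /\ aproj (p ord0) (rep (aproj (p ord0) x)) = aproj (p ord0) x.
    by apply: repP; exists x.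
  exact: (K2 _ _ ord0 Er Ex pr).
exists Es, f, beta; split.
  move=> i; split; first by move=> g [x [Ex ->]]; apply: K1b.
  split; first by move=> g [x [Ex ->]]; apply: K1b.
  move=> phi hphi.
  pose phi' := fun z => phi (aproj (p i) z).
  have h' : forall z, E z -> phi' z ^+ N = 1.
    move=> z Ez; apply: (exp1_dvd (dvdN i)); apply: hphi; by exists z.
  have [chi [cchi hchi]] := PRE _ h'.
  have cH : character (fun g => Gamma0 g /\ Gammap (p i) g) chi.
    split; first by move=> g [Gg _]; apply: cchi.1.
    by move=> g h [Gg _] [Gh _]; apply: cchi.2.
  have HA : forall g, Gamma0 g /\ Gammap (p i) g -> Gammap (p i) g by move=> g [].
  have [y [cy hy]] := extend_char (Gammap_subgroup J (p i)) (subgroupI sG (Gammap_subgroup J (p i))) HA cH.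
  exists y; split => // h [x [Ex ->]].
  rewrite hy; last by split; [apply: K1a | apply: K1b].
  have [e [e1 de]] := key_proj (n i) (ambE _ Ex) (pp i).
  have -> : chi (aproj (p i) x) = chi x ^+ e by rewrite -de (charX e sG cchi (EG _ Ex)).
  rewrite -(hchi _ Ex) /phi'.
  have hp : phi (aproj (p i) x) ^+ (p i ^ n i) = 1 by apply: hphi; exists x.
  rewrite -(expr_mod e hp) e1 modn_small ?expr1 //.
  apply: (@leq_trans (p i ^ 1)); first by rewrite expn1 prime_gt1.
  by rewrite leq_exp2l ?prime_gt1 // n0.
split.
  move=> i ni; split.
    by move=> g /repP [Er _]; exists (rep g); split.
  split.
    move=> g h Hg Hh; have [Eg pg] := repP g Hg; have [Eh ph] := repP h Hh.
    rewrite /f => e; have E' := K2 _ _ i Eg Eh e.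
    by rewrite -pg -ph E'.
  move=> h [x [Ex ->]]; exists (aproj (p ord0) x); split; first by exists x.
  by rewrite /f repE.
split.
  move=> g Hg; have [Eg _] := repP g Hg; have [a1 [a2 [s hs]]] := ambE _ Eg.
  split.
    split.
      by move=> q j nq; rewrite /beta; case: ifP => // _; apply: a1.
    split.
      move=> q j; rewrite /beta; case: ifP => _; last exact: a2.
      by exists 1%N; split => //; rewrite expr1n.
    exists s => q j; rewrite /beta; case: ifP => _ hh; last by apply: hs.
    by case: hh.
  move=> q j [i qi]; rewrite /beta.
  have -> : [exists i, q == p i] by apply/existsP; exists i; apply/eqP.
  by [].
move=> x; split.
  move=> Ex; exists (aproj (p ord0) x); split; first by exists x.
  by rewrite /f /beta repE //; symmetry; exact: (decomp pinj x).
move=> [g [Hg ->]]; have [Eg pg] := repP g Hg.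
suff -> : (fun q j => g q j * (\prod_(i < k.+1 | i != ord0) f i g q j) * beta g q j) = rep g by [].
by rewrite -[RHS](decomp pinj (rep g)) pg.
Qed.
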